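(* Let $n\in\mathbb{N}=\{1,2,\dots\}$, $0\le i\le n-1$, and let $t_1<\dots<t_n$ be the zeros of $H_n$. (i) If $i$ is even, then $$\int_{-\infty}^\infty\frac{t^i}{i!}|h_n(t)|\,dt=\frac{1}{n!}\sum_{m=1}^n(-1)^{m+n}\sum_{k=0}^i\frac{(n-1-k)!}{2^k(i-k)!}t_m^{i-k}h_{n-1-k}(t_m).$$ (ii) If $i$ is odd and $n$ is even, then $$\int_{-\infty}^\infty\frac{|t|^i}{i!}|h_n(t)|\,dt=\frac{1}{n!}\sum_{m=1}^{n/2}(-1)^{m+1}\sum_{k=0}^i\frac{(n-1-k)!}{2^k(i-k)!}t_m^{i-k}h_{n-1-k}(t_m)+\frac{(-1)^{n/2}(n-1-i)!}{n!\,2^i}h_{n-1-i}(0)+\frac{1}{n!}\sum_{m=\frac n2+1}^{n}(-1)^{m}\sum_{k=0}^i\frac{(n-1-k)!}{2^k(i-k)!}t_m^{i-k}h_{n-1-k}(t_m);$$ and if $i$ is odd and $n$ is odd, then $$\int_{-\infty}^\infty\frac{|t|^i}{i!}|h_n(t)|\,dt=\frac{1}{n!}\sum_{m=1}^{\frac{n-1}{2}}(-1)^{m}\sum_{k=0}^i\frac{(n-1-k)!}{2^k(i-k)!}t_m^{i-k}h_{n-1-k}(t_m)+\frac{1}{n!}\sum_{m=\frac{n+3}{2}}^{n}(-1)^{m+1}\sum_{k=0}^i\frac{(n-1-k)!}{2^k(i-k)!}t_m^{i-k}h_{n-1-k}(t_m).$$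
   Context: $H_n$ denotes the $n$-th Hermite polynomial ($H_n(t)=(-1)^ne^{t^2}\frac{d^n}{dt^n}e^{-t^2}$, so $H_0=1$, $H_1(t)=2t$), and the Hermite functions are $h_n(t)=\frac{1}{2^nn!\sqrt{\pi}}e^{-t^2}H_n(t)$, $t\in\mathbb{R}$. The zeros of $H_n$ are real, simple and symmetric about $0$. *)

(* Defs.v *)
From Stdlib Require Import Reals Arith Factorial.
From Coquelicot Require Import Coquelicot.
Open Scope R_scope.

Definition hermite (n : nat) (t : R) : R :=
  (-1) ^ n * exp (t ^ 2) * Derive_n (fun x => exp (- (x ^ 2))) n t.

Definition hermite_fun (n : nat) (t : R) : R :=
  / (2 ^ n * INR (fact n) * sqrt PI) * exp (- (t ^ 2)) * hermite n t.

Definition inner_sum (n i : nat) (x : R) : R :=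
  sum_n_m (fun k => INR (fact (n - 1 - k)) / (2 ^ k * INR (fact (i - k)))
                     * x ^ (i - k) * hermite_fun (n - 1 - k) x) 0 i.

Definition is_integral_R (f : R -> R) (v : R) : Prop :=
  is_RInt_gen f (Rbar_locally m_infty) (Rbar_locally p_infty) v.

(* Main.v *)
Require Import Defs.
From Stdlib Require Import Reals Arith Lia Lra.
From Coquelicot Require Import Coquelicot.
Open Scope R_scope.

Fixpoint He (n : nat) (t : R) : R :=
  match n with
  | O => 1
  | S O => 2 * t
  | S ((S k) as k1) => 2 * t * He k1 t - 2 * INR k1 * He k t
  end.

Lemma He_SS k t : He (S (S k)) t = 2 * t * He (S k) t - 2 * INR (S k) * He k t.
Proof. reflexivity. Qed.

Lemma is_derive_eqv (f : R -> R) (x l1 l2 : R) : is_derive f x l1 -> l1 = l2 -> is_derive f x l2.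
Proof. intros H E; rewrite <- E; exact H. Qed.

Lemma is_derive_mulR (f g : R -> R) x df dg :
  is_derive f x df -> is_derive g x dg ->
  is_derive (fun y => f y * g y) x (df * g x + f x * dg).
Proof. intros Hf Hg. apply (is_derive_mult f g x df dg Hf Hg). intros; apply Rmult_comm. Qed.

Lemma is_derive_minR (f g : R -> R) x df dg :
  is_derive f x df -> is_derive g x dg ->
  is_derive (fun y => f y - g y) x (df - dg).
Proof. intros Hf Hg. apply (is_derive_minus f g x df dg Hf Hg). Qed.

Lemma is_derive_plusR (f g : R -> R) x df dg :
  is_derive f x df -> is_derive g x dg ->
  is_derive (fun y => f y + g y) x (df + dg).
Proof. intros Hf Hg. apply (is_derive_plus f g x df dg Hf Hg). Qed.

Lemma is_derive_cstR (c x : R) : is_derive (fun _ => c) x 0.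
Proof. apply (@is_derive_const R_AbsRing R_NormedModule). Qed.

Lemma is_derive_idR (x : R) : is_derive (fun y => y) x 1.
Proof. apply (@is_derive_id R_AbsRing). Qed.

Lemma He1_derive x : is_derive (He 1) x (2 * INR 1 * He 0 x).
Proof.
  apply is_derive_eqv with (2 * 1).
  - apply (is_derive_ext (fun y => 2 * y)). { intro; reflexivity. }
    apply is_derive_scal, is_derive_idR.
  - simpl; ring.
Qed.

Lemma He0_derive x : is_derive (He 0) x 0.
Proof. apply (is_derive_ext (fun _ => 1)). { intro; reflexivity. } apply is_derive_cstR. Qed.

Lemma He_derive_aux k x :
  is_derive (He (S k)) x (2 * INR (S k) * He k x) /\
  is_derive (He (S (S k))) x (2 * INR (S (S k)) * He (S k) x).
Proof.
  induction k as [|k [IH1 IH2]].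
  - split.
    + apply He1_derive.
    + eapply is_derive_ext. { intro t; symmetry; apply He_SS. }
      eapply is_derive_eqv.
      * apply is_derive_minR.
        -- apply is_derive_mulR. apply is_derive_scal, is_derive_idR.
           apply He1_derive.
        -- apply is_derive_scal, He0_derive.
      * simpl; ring.
  - split; [exact IH2|].
    eapply is_derive_ext. { intro t; symmetry; apply He_SS. }
    eapply is_derive_eqv.
    + apply is_derive_minR.
      * apply is_derive_mulR. apply is_derive_scal, is_derive_idR. exact IH2.
      * apply is_derive_scal. exact IH1.
    + rewrite (He_SS k x). rewrite !S_INR. ring.
Qed.

Lemma He_derive k x : is_derive (He k) x (2 * INR k * He (k - 1) x).
Proof.
  destruct k as [|k].
  - eapply is_derive_eqv. apply He0_derive. simpl; ring.
  - replace (S k - 1)%nat with k by lia. apply (proj1 (He_derive_aux k x)).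
Qed.

Lemma He_rec k t : 2 * t * He k t - 2 * INR k * He (k - 1) t = He (S k) t.
Proof.
  destruct k as [|k].
  - simpl; ring.
  - replace (S k - 1)%nat with k by lia. rewrite He_SS. reflexivity.
Qed.

Lemma gauss_derive x : is_derive (fun y => exp (- (y ^ 2))) x (-2 * x * exp (- (x ^ 2))).
Proof. auto_derive; [auto|]. replace (- (x * (x * 1))) with (- x ^ 2) by ring. ring. Qed.

Lemma Derive_n_gauss k : forall t,
  Derive_n (fun x => exp (- (x ^ 2))) k t = (-1) ^ k * He k t * exp (- (t ^ 2)).
Proof.
  induction k as [|k IH]; intro t.
  - simpl; ring.
  - simpl Derive_n. rewrite (Derive_ext _ (fun y => (-1) ^ k * He k y * exp (- (y ^ 2)))).
    2: exact IH.
    apply is_derive_unique.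
    eapply is_derive_eqv.
    + apply is_derive_mulR. apply is_derive_scal. apply He_derive. apply gauss_derive.
    + rewrite <- He_rec. simpl. ring.
Qed.

Lemma hermite_He k t : hermite k t = He k t.
Proof.
  unfold hermite. rewrite Derive_n_gauss.
  assert (E1 : exp (t ^ 2) * exp (- t ^ 2) = 1).
  { rewrite <- exp_plus. replace (t ^ 2 + - t ^ 2) with 0 by ring. apply exp_0. }
  assert (E2 : (-1) ^ k * (-1) ^ k = 1).
  { rewrite <- Rpow_mult_distr. replace (-1 * -1) with 1 by ring. apply pow1. }
  transitivity (((-1) ^ k * (-1) ^ k) * (exp (t ^ 2) * exp (- t ^ 2)) * He k t).
  - ring.
  - rewrite E1, E2; ring.
Qed.

Definition hC (k : nat) : R := / (2 ^ k * INR (fact k) * sqrt PI).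

Lemma hermite_fun_He k t : hermite_fun k t = hC k * exp (- (t ^ 2)) * He k t.
Proof. unfold hermite_fun, hC. rewrite hermite_He. reflexivity. Qed.

Lemma sqrtPI_pos : 0 < sqrt PI.
Proof. apply sqrt_lt_R0, PI_RGT_0. Qed.

Lemma fact_pos k : 0 < INR (fact k).
Proof. apply lt_0_INR, lt_O_fact. Qed.

Lemma hC_pos k : 0 < hC k.
Proof.
  unfold hC. apply Rinv_0_lt_compat. apply Rmult_lt_0_compat.
  apply Rmult_lt_0_compat. apply pow_lt; lra. apply fact_pos. apply sqrtPI_pos.
Qed.

Lemma hC_S k : 2 * INR (S k) * hC (S k) = hC k.
Proof.
  unfold hC. rewrite fact_simpl, mult_INR. simpl pow.
  assert (H1 := fact_pos k). assert (H2 := sqrtPI_pos). assert (H3 : 0 < 2 ^ k) by (apply pow_lt; lra).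
  assert (H4 : 0 < INR (S k)) by (apply lt_0_INR; lia).
  field. repeat split; lra.
Qed.

Lemma hf_derive j x : is_derive (hermite_fun j) x (-2 * INR (S j) * hermite_fun (S j) x).
Proof.
  eapply is_derive_ext. { intro y; symmetry; apply hermite_fun_He. }
  eapply is_derive_eqv.
  - apply is_derive_mulR. apply is_derive_scal. apply gauss_derive. apply He_derive.
  - rewrite hermite_fun_He, <- He_rec, <- (hC_S j). ring.
Qed.

Lemma inner_sum_SS n i x :
  inner_sum (S n) (S i) x =
  INR (fact n) / INR (fact (S i)) * x ^ (S i) * hermite_fun n x + / 2 * inner_sum n i x.
Proof.
  unfold inner_sum.
  rewrite sum_Sn_m by lia. rewrite <- sum_n_m_S.
  rewrite <- (sum_n_m_mult_l (K := R_Ring)).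
  match goal with |- plus ?a ?b = _ => change (plus a b) with (a + b) end.
  f_equal.
  - replace (S n - 1 - 0)%nat with n by lia. replace (S i - 0)%nat with (S i) by lia.
    match goal with |- ?a = ?b => change (@eq R a b) end.
    simpl pow. field. apply Rgt_not_eq, fact_pos.
  - apply sum_n_m_ext. intro k.
    replace (S n - 1 - S k)%nat with (n - 1 - k)%nat by lia.
    replace (S i - S k)%nat with (i - k)%nat by lia.
    match goal with |- ?a = ?b => change (@eq R a b) end.
    change (mult (/ 2) ?a) with (/ 2 * a). simpl pow.
    assert (H1 := fact_pos (i - k)). assert (H3 : 0 < 2 ^ k) by (apply pow_lt; lra).
    field. lra.
Qed.

Lemma inner_sum_0 n x : inner_sum (S n) 0 x = INR (fact n) * hermite_fun n x.
Proof.
  unfold inner_sum. rewrite sum_n_n.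
  replace (S n - 1 - 0)%nat with n by lia. simpl. field.
Qed.

Lemma is_derive_powx (x : R) (k : nat) : is_derive (fun y => y ^ k) x (INR k * x ^ (k - 1)).
Proof.
  eapply is_derive_eqv. apply is_derive_pow, is_derive_idR.
  replace (Init.Nat.pred k) with (k - 1)%nat by lia. ring.
Qed.

Lemma inner_derive i : forall n x, (i < n)%nat ->
  is_derive (inner_sum n i) x
    (-2 * INR (fact n) / INR (fact i) * x ^ i * hermite_fun n x).
Proof.
  induction i as [|i IH]; intros n x Hin.
  - destruct n as [|n]; [lia|].
    eapply is_derive_ext. { intro y; symmetry; apply inner_sum_0. }
    eapply is_derive_eqv. apply is_derive_scal, hf_derive.
    rewrite fact_simpl, mult_INR. simpl. field.
  - destruct n as [|n]; [lia|].
    eapply is_derive_ext. { intro y; symmetry; apply inner_sum_SS. }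
    eapply is_derive_eqv.
    + apply is_derive_plusR.
      * apply is_derive_mulR. apply is_derive_scal, is_derive_powx. apply hf_derive.
      * apply is_derive_scal, IH. lia.
    + replace (S i - 1)%nat with i by lia.
      rewrite (fact_simpl i), (fact_simpl n), !mult_INR.
      assert (H1 := fact_pos i). assert (H2 := fact_pos n).
      assert (H4 : 0 < INR (S i)) by (apply lt_0_INR; lia).
      simpl pow. field. lra.
Qed.


Definition Bd (f : R -> R) := forall m, exists C, forall x, 1 <= Rabs x -> Rabs (x ^ m * f x) <= C.

Lemma Bd_ext f g : (forall x, f x = g x) -> Bd f -> Bd g.
Proof. intros E H m. destruct (H m) as [C HC]. exists C. intros x Hx. rewrite <- E. auto. Qed.

Lemma Bd_lin a b f g : Bd f -> Bd g -> Bd (fun x => a * f x + b * g x).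
Proof.
  intros Hf Hg m. destruct (Hf m) as [C1 H1]. destruct (Hg m) as [C2 H2].
  exists (Rabs a * C1 + Rabs b * C2). intros x Hx.
  replace (x ^ m * (a * f x + b * g x)) with (a * (x ^ m * f x) + b * (x ^ m * g x)) by ring.
  eapply Rle_trans. apply Rabs_triang. rewrite (Rabs_mult a), (Rabs_mult b).
  apply Rplus_le_compat; apply Rmult_le_compat_l; try apply Rabs_pos; auto.
Qed.

Lemma Bd_xpow j f : Bd f -> Bd (fun x => x ^ j * f x).
Proof.
  intros Hf m. destruct (Hf (m + j)%nat) as [C H]. exists C. intros x Hx.
  rewrite <- Rmult_assoc, <- pow_add. auto.
Qed.

Lemma exp_mult_nat N z : exp (INR N * z) = exp z ^ N.
Proof.
  induction N as [|N IH].
  - simpl. rewrite Rmult_0_l. apply exp_0.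
  - rewrite S_INR. replace ((INR N + 1) * z) with (INR N * z + z) by ring.
    rewrite exp_plus, IH. simpl. ring.
Qed.

Lemma Bd_gauss : Bd (fun x => exp (- (x ^ 2))).
Proof.
  intro m. set (N := S m). exists (INR N ^ N). intros x Hx.
  assert (HN : 0 < INR N) by (apply lt_0_INR; unfold N; lia).
  rewrite Rabs_mult, (Rabs_right (exp _)) by (apply Rle_ge, Rlt_le, exp_pos).
  rewrite exp_Ropp.
  assert (Hz : (x ^ 2 / INR N) ^ N <= exp (x ^ 2)).
  { replace (x ^ 2) with (INR N * (x ^ 2 / INR N)) at 2 by (field; lra).
    rewrite exp_mult_nat. apply pow_incr. split.
    - apply Rmult_le_pos. apply pow2_ge_0. apply Rlt_le, Rinv_0_lt_compat, HN.
    - assert (0 <= x ^ 2 / INR N) by (apply Rmult_le_pos; [apply pow2_ge_0|apply Rlt_le, Rinv_0_lt_compat, HN]).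
      destruct (Req_dec (x ^ 2 / INR N) 0) as [E|E].
      + rewrite E, exp_0; lra.
      + pose proof (exp_ineq1 _ E); lra. }
  assert (Hp : Rabs (x ^ m) <= (x ^ 2) ^ N).
  { rewrite <- RPow_abs. rewrite <- (pow2_abs x).
    rewrite <- pow_mult. apply Rle_pow; auto. unfold N; lia. }
  unfold Rdiv in Hz. rewrite Rpow_mult_distr in Hz.
  assert (Hinv : (/ INR N) ^ N = / (INR N ^ N)) by (rewrite pow_inv; reflexivity).
  rewrite Hinv in Hz.
  assert (HNN : 0 < INR N ^ N) by (apply pow_lt; auto).
  assert (He : 0 < exp (x ^ 2)) by apply exp_pos.
  apply Rmult_le_reg_r with (exp (x ^ 2)); auto.
  rewrite Rmult_assoc, Rinv_l by lra. rewrite Rmult_1_r.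
  apply Rle_trans with ((x ^ 2) ^ N); auto.
  apply Rmult_le_reg_r with (/ INR N ^ N). apply Rinv_0_lt_compat; auto.
  rewrite (Rmult_comm (INR N ^ N)), Rmult_assoc, Rinv_r by lra. lra.
Qed.

Lemma Bd_He_gauss k : Bd (fun x => He k x * exp (- (x ^ 2))) /\ Bd (fun x => He (S k) x * exp (- (x ^ 2))).
Proof.
  induction k as [|k [IH1 IH2]].
  - split.
    + eapply Bd_ext. 2: apply Bd_gauss. intro x; simpl; ring.
    + eapply Bd_ext. 2: apply (Bd_lin 2 0 _ _ (Bd_xpow 1 _ Bd_gauss) Bd_gauss). intro x; simpl; ring.
  - split; [exact IH2|].
    eapply Bd_ext. 2: apply (Bd_lin 2 (- (2 * INR (S k))) _ _ (Bd_xpow 1 _ IH2) IH1).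
    intro x. rewrite He_SS. simpl; ring.
Qed.

Lemma Bd_hf k : Bd (hermite_fun k).
Proof.
  eapply Bd_ext. 2: apply (Bd_lin (hC k) 0 _ _ (proj1 (Bd_He_gauss k)) Bd_gauss).
  intro x. rewrite hermite_fun_He. ring.
Qed.

Lemma Bd_sum (F : nat -> R -> R) a b : (forall k, Bd (F k)) -> Bd (fun x => sum_n_m (fun k => F k x) a b).
Proof.
  intro HF. induction b as [|b IH].
  - destruct a as [|a].
    + eapply Bd_ext. 2: apply (HF 0%nat). intro x. rewrite sum_n_n. reflexivity.
    + eapply Bd_ext. 2: apply (Bd_lin 0 0 _ _ (HF 0%nat) (HF 0%nat)).
      intro x. rewrite sum_n_m_zero by lia. simpl. change (@zero R_AbelianMonoid) with 0. ring.
  - destruct (Nat.le_gt_cases a b) as [Hab|Hab].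
    + eapply Bd_ext. 2: apply (Bd_lin 1 1 _ _ IH (HF (S b))).
      intro x. rewrite sum_n_Sm by lia. simpl. change (plus ?u ?v) with (u + v). ring.
    + destruct (Nat.eq_dec a (S b)) as [->|Hne].
      * eapply Bd_ext. 2: apply (HF (S b)). intro x. rewrite sum_n_n. reflexivity.
      * eapply Bd_ext. 2: apply (Bd_lin 0 0 _ _ (HF 0%nat) (HF 0%nat)).
        intro x. rewrite sum_n_m_zero by lia. change (@zero R_AbelianMonoid) with 0. ring.
Qed.

Lemma Bd_inner n i : Bd (inner_sum n i).
Proof.
  unfold inner_sum. apply Bd_sum. intro k.
  eapply Bd_ext. 2: apply (Bd_lin (INR (fact (n - 1 - k)) / (2 ^ k * INR (fact (i - k)))) 0 _ _
                           (Bd_xpow (i - k) _ (Bd_hf (n - 1 - k))) (Bd_hf 0)).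
  intro x. simpl. ring.
Qed.

Lemma Bd_small f : Bd f -> forall eps, 0 < eps -> exists M, 0 < M /\ forall x, M < Rabs x -> Rabs (f x) < eps.
Proof.
  intros Hf eps Heps. destruct (Hf 1%nat) as [C HC].
  assert (C0 : 0 <= C). { eapply Rle_trans. apply Rabs_pos. apply (HC 1). rewrite Rabs_R1; lra. }
  exists (Rmax 1 (C / eps) + 1). split. { pose proof (Rmax_l 1 (C / eps)); lra. }
  intros x Hx.
  pose proof (Rmax_l 1 (C / eps)). pose proof (Rmax_r 1 (C / eps)).
  assert (H1 : 1 <= Rabs x) by lra.
  specialize (HC x H1). rewrite pow_1, Rabs_mult in HC.
  assert (Hx0 : 0 < Rabs x) by lra.
  assert (HCe : C < eps * Rabs x).
  { apply Rle_lt_trans with (eps * (C / eps)). right; field; lra.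
    apply Rmult_lt_compat_l; lra. }
  apply Rmult_lt_reg_l with (Rabs x); auto. nra.
Qed.

Lemma Bd_lim_p f : Bd f -> filterlim f (Rbar_locally p_infty) (locally 0).
Proof.
  intro Hf. apply filterlim_locally. intro eps.
  destruct (Bd_small f Hf eps (cond_pos eps)) as [M [HM H]].
  exists M. intros x Hx. change (Rabs (f x - 0) < eps). rewrite Rminus_0_r. apply H.
  rewrite Rabs_right; lra.
Qed.

Lemma Bd_lim_m f : Bd f -> filterlim f (Rbar_locally m_infty) (locally 0).
Proof.
  intro Hf. apply filterlim_locally. intro eps.
  destruct (Bd_small f Hf eps (cond_pos eps)) as [M [HM H]].
  exists (- M). intros x Hx. change (Rabs (f x - 0) < eps). rewrite Rminus_0_r. apply H.
  rewrite Rabs_left; lra.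
Qed.


Ltac rring := repeat change (plus ?u ?v) with (u + v);
  match goal with |- ?a = ?b => change (@eq R a b) end; ring.

Section GI.
Variables (f A : R -> R).
Hypothesis HAd : forall x, is_derive A x (f x).
Hypothesis Hfc : forall x, continuous f x.
Hypothesis HAm : filterlim A (Rbar_locally m_infty) (locally 0).
Hypothesis HAp : filterlim A (Rbar_locally p_infty) (locally 0).

Let g (s : R) := fun x => s * A x.

Lemma g_Derive s x : Derive (g s) x = s * f x.
Proof. apply is_derive_unique. apply (is_derive_scal A x s (f x)), HAd. Qed.

Lemma g_ex s x : ex_derive (g s) x.
Proof. exists (s * f x). apply (is_derive_scal A x s (f x)), HAd. Qed.

Lemma g_cont s x : continuous (Derive (g s)) x.
Proof.
  apply continuous_ext with (fun y => s * f y). { intro; symmetry; apply g_Derive. }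
  apply (continuous_scal_r s f x), Hfc.
Qed.

Lemma g_lim s F {FF : Filter F} : filterlim A F (locally 0) -> filterlim (g s) F (locally 0).
Proof.
  intro H. replace 0 with (scal s 0) by (change (s * 0 = 0); ring).
  apply (filterlim_comp _ _ _ A (fun z : R => scal s z) F (locally 0) (locally (scal s 0)) H).
  apply (@filterlim_scal_r R_AbsRing R_NormedModule).
Qed.

Lemma at_point_lim (h : R -> R) b : filterlim h (at_point b) (locally (h b)).
Proof. intros P HP. apply (locally_singleton (h b) P). exact HP. Qed.

Lemma Derive_int_gen s Fa Fb {FFa : Filter Fa} {FFb : Filter Fb} la lb :
  filterlim (g s) Fa (locally la) -> filterlim (g s) Fb (locally lb) ->
  is_RInt_gen (Derive (g s)) Fa Fb (lb - la).
Proof.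
  intros Ha Hb. apply is_RInt_gen_Derive; auto.
  - apply filter_forall. intros; apply g_ex.
  - apply filter_forall. intros; apply g_cont.
Qed.

Variable F : R -> R.

Lemma int_left b s : (forall x, x < b -> F x = s * f x) ->
  is_RInt_gen F (Rbar_locally m_infty) (at_point b) (s * A b).
Proof.
  intro HF.
  replace (s * A b) with (g s b - 0) by (unfold g; ring).
  apply (is_RInt_gen_ext (Derive (g s))). 2: apply (Derive_int_gen s).
  - apply (Filter_prod _ _ _ (fun a => a < b) (fun c => c = b)).
    + simpl. exists b. auto.
    + reflexivity.
    + intros a c Ha Hc. simpl. subst c. rewrite Rmin_left, Rmax_right by lra.
      intros x Hx. rewrite g_Derive, HF; lra.
  all: first [exact _ | apply Rbar_locally_filter | apply g_lim; auto | apply at_point_lim]. Unshelve. all: apply Rbar_locally_filter.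
Qed.

Lemma int_right b s : (forall x, b < x -> F x = s * f x) ->
  is_RInt_gen F (at_point b) (Rbar_locally p_infty) (s * (0 - A b)).
Proof.
  intro HF.
  replace (s * (0 - A b)) with (0 - g s b) by (unfold g; ring).
  apply (is_RInt_gen_ext (Derive (g s))). 2: apply (Derive_int_gen s).
  - apply (Filter_prod _ _ _ (fun c => c = b) (fun a => b < a)).
    + reflexivity.
    + simpl. exists b. auto.
    + intros c a Hc Ha. simpl. subst c. rewrite Rmin_left, Rmax_right by lra.
      intros x Hx. rewrite g_Derive, HF; lra.
  all: first [exact _ | apply Rbar_locally_filter | apply g_lim; auto | apply at_point_lim]. Unshelve. all: apply Rbar_locally_filter.
Qed.

Lemma int_mid a b s : a < b -> (forall x, a < x < b -> F x = s * f x) ->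
  is_RInt_gen F (at_point a) (at_point b) (s * (A b - A a)).
Proof.
  intros Hab HF.
  replace (s * (A b - A a)) with (g s b - g s a) by (unfold g; ring).
  apply (is_RInt_gen_ext (Derive (g s))). 2: apply (Derive_int_gen s).
  - apply (Filter_prod _ _ _ (fun c => c = a) (fun c => c = b)); try reflexivity.
    intros c d Hc Hd. simpl. subst c d. rewrite Rmin_left, Rmax_right by lra.
    intros x Hx. rewrite g_Derive, HF; lra.
  all: first [exact _ | apply Rbar_locally_filter | apply g_lim; auto | apply at_point_lim]. Unshelve. all: apply Rbar_locally_filter.
Qed.

Lemma GI (K : nat) (p sg : nat -> R) :
  (forall k, (k < K)%nat -> p k < p (S k)) ->
  (forall x, x < p 0%nat -> F x = sg 0%nat * f x) ->
  (forall k x, (k < K)%nat -> p k < x < p (S k) -> F x = sg (S k) * f x) ->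
  (forall x, p K < x -> F x = sg (S K) * f x) ->
  is_integral_R F (sum_n_m (fun k => (sg k - sg (S k)) * A (p k)) 0 K).
Proof.
  intros Hp H0 Hmid HK.
  assert (Hind : forall K', (K' <= K)%nat ->
     is_RInt_gen F (Rbar_locally m_infty) (at_point (p K'))
       (sum_n_m (fun k => (sg k - sg (S k)) * A (p k)) 0 K' + sg (S K') * A (p K'))).
  { induction K' as [|K' IH]; intro HK'.
    - rewrite sum_n_n.
      replace ((sg 0%nat - sg 1%nat) * A (p 0%nat) + sg 1%nat * A (p 0%nat)) with (sg 0%nat * A (p 0%nat)) by ring.
      apply int_left. exact H0.
    - rewrite sum_n_Sm by lia.
      change (plus ?u ?v) with (u + v).
      replace (sum_n_m (fun k => (sg k - sg (S k)) * A (p k)) 0 K' + (sg (S K') - sg (S (S K'))) * A (p (S K')) +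
               sg (S (S K')) * A (p (S K')))
        with (plus (sum_n_m (fun k => (sg k - sg (S k)) * A (p k)) 0 K' + sg (S K') * A (p K'))
                   (sg (S K') * (A (p (S K')) - A (p K')))) by rring.
      apply (is_RInt_gen_Chasles (Fa := Rbar_locally m_infty) (Fc := at_point (p (S K'))) F (p K')).
      + apply IH; lia.
      + apply int_mid. apply Hp; lia. intros; apply Hmid; auto; lia. }
  unfold is_integral_R.
  replace (sum_n_m (fun k => (sg k - sg (S k)) * A (p k)) 0 K)
    with (plus (sum_n_m (fun k => (sg k - sg (S k)) * A (p k)) 0 K + sg (S K) * A (p K))
               (sg (S K) * (0 - A (p K)))) by rring.
  apply (is_RInt_gen_Chasles (Fa := Rbar_locally m_infty) (Fc := Rbar_locally p_infty) F (p K)).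
  - apply Hind; lia.
  - apply int_right. exact HK.
Qed.

End GI.


Lemma He_neg k : forall x, He k (- x) = (-1) ^ k * He k x /\ He (S k) (- x) = (-1) ^ (S k) * He (S k) x.
Proof.
  induction k as [|k IH]; intro x.
  - simpl; split; ring.
  - destruct (IH x) as [H1 H2]. split; [exact H2|].
    rewrite !He_SS, H1, H2. simpl; ring.
Qed.

Lemma He_pos k : forall x, INR k + 1 <= x -> 0 < He k x /\ x * He k x <= He (S k) x.
Proof.
  induction k as [|k IH]; intros x Hx.
  - simpl in *. split; lra.
  - rewrite S_INR in Hx. destruct (IH x ltac:(lra)) as [H1 H2].
    assert (Hk : 0 <= INR k) by apply pos_INR.
    split; [nra|].
    rewrite He_SS.
    assert (H3 : He k x <= He (S k) x / x).
    { apply Rmult_le_reg_l with x. lra. field_simplify; lra. }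
    assert (H4 : 2 * INR (S k) * He k x <= 2 * INR (S k) * (He (S k) x / x)).
    { apply Rmult_le_compat_l; [rewrite S_INR; lra | exact H3]. }
    assert (H5 : 2 * INR (S k) * (He (S k) x / x) <= x * He (S k) x).
    { assert (Hy : 0 < He (S k) x) by nra.
      assert (Hyx : 0 <= He (S k) x / x) by (apply Rlt_le, Rdiv_lt_0_compat; lra).
      assert (Hxx : 2 * INR (S k) <= x * x) by (rewrite S_INR; nra).
      apply Rle_trans with ((x * x) * (He (S k) x / x)).
      apply Rmult_le_compat_r; auto. right; field; lra. }
    lra.
Qed.

Lemma He_no_common k x : ~ (He k x = 0 /\ He (S k) x = 0).
Proof.
  induction k as [|k IH].
  - simpl. lra.
  - intros [H1 H2]. apply IH. split; auto.
    rewrite He_SS, H1 in H2.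
    assert (0 < INR (S k)) by (apply lt_0_INR; lia).
    apply Rmult_eq_reg_l with (- (2 * INR (S k))); [lra|]. lra.
Qed.

Lemma He_derivable_pt k x : derivable_pt (He k) x.
Proof. exists (2 * INR k * He (k - 1) x). apply is_derive_Reals, He_derive. Qed.

Lemma He_cont k : continuity (He k).
Proof. intro x. apply derivable_continuous_pt, He_derivable_pt. Qed.

Section Zeros.
Variables (n : nat) (t : nat -> R).
Hypothesis Hn : (1 <= n)%nat.
Hypothesis Hinc : forall m : nat, (1 <= m)%nat -> (m < n)%nat -> t m < t (S m).
Hypothesis Hz : forall x : R, He n x = 0 <-> exists m : nat, (1 <= m <= n)%nat /\ x = t m.

Lemma t_mono a b : (1 <= a)%nat -> (a < b)%nat -> (b <= n)%nat -> t a < t b.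
Proof.
  intros Ha Hab Hb. induction b as [|b IH]; [lia|].
  destruct (Nat.eq_dec a b) as [->|Hne].
  - apply Hinc; lia.
  - apply Rlt_trans with (t b). apply IH; lia. apply Hinc; lia.
Qed.

Lemma t_mono_le a b : (1 <= a)%nat -> (a <= b)%nat -> (b <= n)%nat -> t a <= t b.
Proof.
  intros Ha Hab Hb. destruct (Nat.eq_dec a b) as [->|Hne]. lra.
  left; apply t_mono; lia.
Qed.

Definition In_int (m : nat) (x : R) : Prop :=
  ((m = 0)%nat -> x < t 1) /\ ((1 <= m)%nat -> t m < x) /\ ((m < n)%nat -> x < t (S m)).

Lemma no_zero_in m x : (m <= n)%nat -> In_int m x -> He n x <> 0.
Proof.
  intros Hm [H0 [H1 H2]] E. apply Hz in E. destruct E as [j [Hj ->]].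
  destruct (Nat.le_gt_cases j m) as [Hjm|Hjm].
  - destruct m as [|m]. lia.
    pose proof (t_mono_le j (S m) ltac:(lia) Hjm Hm). specialize (H1 ltac:(lia)). lra.
  - destruct (Nat.eq_dec m 0) as [->|Hm0].
    + pose proof (t_mono_le 1 j ltac:(lia) ltac:(lia) ltac:(lia)). specialize (H0 eq_refl). lra.
    + pose proof (t_mono_le (S m) j ltac:(lia) ltac:(lia) ltac:(lia)). specialize (H2 ltac:(lia)). lra.
Qed.

Lemma In_convex m x y z : In_int m x -> In_int m y -> Rmin x y <= z <= Rmax x y -> In_int m z.
Proof.
  intros [A0 [A1 A2]] [B0 [B1 B2]] Hz'.
  pose proof (Rmin_l x y). pose proof (Rmin_r x y). pose proof (Rmax_l x y). pose proof (Rmax_r x y).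
  destruct (Rle_dec x y).
  - rewrite Rmin_left, Rmax_right in Hz' by lra.
    split; [|split]; intros; [specialize (B0 H3)|specialize (A1 H3)|specialize (B2 H3)]; lra.
  - rewrite Rmin_right, Rmax_left in Hz' by lra.
    split; [|split]; intros; [specialize (A0 H3)|specialize (B1 H3)|specialize (A2 H3)]; lra.
Qed.

Lemma sign_const m c x y : (m <= n)%nat -> In_int m x -> In_int m y -> 0 < c * He n x -> 0 < c * He n y.
Proof.
  intros Hm Hx Hy Hpos.
  destruct (Rlt_le_dec 0 (c * He n y)) as [|Hle]; auto. exfalso.
  assert (Hc : c <> 0) by (intro E; rewrite E in Hpos; lra).
  destruct (IVT_gen (fun u => c * He n u) x y 0) as [z [Hzi Hzv]].
  - intro u. apply continuity_pt_scal, He_cont.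
  - pose proof (Rmin_l (c * He n x) (c * He n y)). pose proof (Rmin_r (c * He n x) (c * He n y)).
    pose proof (Rmax_l (c * He n x) (c * He n y)). pose proof (Rmax_r (c * He n x) (c * He n y)).
    lra.
  - apply (no_zero_in m z Hm (In_convex m x y z Hx Hy Hzi)).
    apply Rmult_eq_reg_l with c; auto. rewrite Rmult_0_r. exact Hzv.
Qed.

Lemma local_sign z d : He n z = 0 -> is_derive (He n) z d -> d <> 0 ->
  exists del, 0 < del /\ forall h, h <> 0 -> Rabs h < del -> 0 < He n (z + h) * d * h.
Proof.
  intros Hz0 Hd Hd0. apply is_derive_Reals in Hd.
  destruct (Hd (Rabs d) (Rabs_pos_lt d Hd0)) as [del Hdel].
  exists del. split. apply cond_pos. intros h Hh Hhd.
  specialize (Hdel h Hh Hhd). rewrite Hz0, Rminus_0_r in Hdel.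
  set (q := He n (z + h) / h) in *.
  assert (Hq : 0 < q * d).
  { destruct (Rle_dec 0 d).
    - assert (Dp : 0 < d) by (destruct r as [r|r]; [exact r| congruence]).
      rewrite (Rabs_right d) in Hdel by lra. apply Rabs_def2 in Hdel.
      apply Rmult_lt_0_compat; lra.
    - rewrite (Rabs_left d) in Hdel by lra. apply Rabs_def2 in Hdel.
      assert (q < 0) by lra. nra. }
  assert (E : He n (z + h) = q * h) by (unfold q; field; auto).
  rewrite E. replace (q * h * d * h) with ((q * d) * (h * h)) by ring.
  apply Rmult_lt_0_compat; auto. nra.
Qed.

Lemma sign_all j : (j <= n)%nat -> forall x, In_int (n - j) x -> 0 < (-1) ^ j * He n x.
Proof.
  induction j as [|j IH]; intros Hj x Hx.
  - replace (n - 0)%nat with n in Hx by lia.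
    set (X := Rmax (t n + 1) (INR n + 1)).
    assert (HX : In_int n X).
    { pose proof (Rmax_l (t n + 1) (INR n + 1)). unfold In_int. split; [|split]; intros; try lia; unfold X; lra. }
    apply (sign_const n 1 X x); auto.
    rewrite Rmult_1_l. apply He_pos. apply Rmax_r.
  - set (m := (n - j)%nat).
    assert (Hm1 : (1 <= m)%nat) by (unfold m; lia).
    assert (Hmn : (m <= n)%nat) by (unfold m; lia).
    replace (n - S j)%nat with (m - 1)%nat in Hx by (unfold m; lia).
    set (z := t m).
    assert (Hz0 : He n z = 0) by (apply Hz; exists m; split; [lia|reflexivity]).
    set (d := 2 * INR n * He (n - 1) z).
    assert (Hd0 : d <> 0).
    { unfold d. intro E. assert (0 < INR n) by (apply lt_0_INR; lia).
      apply (He_no_common (n - 1) z). split.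
      - apply Rmult_eq_reg_l with (2 * INR n); lra.
      - replace (S (n - 1)) with n by lia. exact Hz0. }
    destruct (local_sign z d Hz0 (He_derive n z) Hd0) as [del [Hdel Hloc]].
    set (w := if Compare_dec.lt_dec m n then t (S m) - t m else 1).
    assert (Hw : 0 < w).
    { unfold w. destruct (Compare_dec.lt_dec m n). pose proof (Hinc m Hm1 l). lra. lra. }
    set (h1 := Rmin del w / 2).
    assert (Hh1 : 0 < h1 /\ h1 < del /\ h1 < w).
    { pose proof (Rmin_l del w). pose proof (Rmin_r del w).
      assert (0 < Rmin del w) by (apply Rmin_glb_lt; auto). unfold h1; lra. }
    assert (Hx1 : In_int m (z + h1)).
    { unfold In_int. split; [|split]; intros; try lia.
      - unfold z; lra.
      - unfold w in Hh1. destruct (Compare_dec.lt_dec m n); [|lia]. unfold z; lra. }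
    assert (S1 : 0 < (-1) ^ j * He n (z + h1)).
    { apply IH; [lia|]. exact Hx1. }
    assert (L1 : 0 < He n (z + h1) * d * h1).
    { apply Hloc; [lra|]. rewrite Rabs_right; lra. }
    set (w' := if Compare_dec.lt_dec 1 m then t m - t (m - 1) else 1).
    assert (Hw' : 0 < w').
    { unfold w'. destruct (Compare_dec.lt_dec 1 m). pose proof (Hinc (m - 1) ltac:(lia) ltac:(lia)).
      replace (S (m - 1)) with m in H by lia. lra. lra. }
    set (h2 := Rmin del w' / 2).
    assert (Hh2 : 0 < h2 /\ h2 < del /\ h2 < w').
    { pose proof (Rmin_l del w'). pose proof (Rmin_r del w').
      assert (0 < Rmin del w') by (apply Rmin_glb_lt; auto). unfold h2; lra. }
    assert (Hx2 : In_int (m - 1) (z + - h2)).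
    { unfold In_int. split; [|split]; intros.
      - unfold z. replace (t m) with (t 1%nat) by (f_equal; lia). lra.
      - unfold w' in Hh2. destruct (Compare_dec.lt_dec 1 m); [|lia]. unfold z; lra.
      - replace (S (m - 1)) with m by lia. unfold z; lra. }
    assert (L2 : 0 < He n (z + - h2) * d * - h2).
    { apply Hloc; [lra|]. rewrite Rabs_left; lra. }
    set (s := (-1) ^ j) in *.
    assert (Hsd : 0 < s * d).
    { assert (0 < He n (z + h1) * d) by nra. nra. }
    assert (N2 : He n (z + - h2) * d < 0) by nra.
    assert (S2 : 0 < (-1) ^ S j * He n (z + - h2)).
    { simpl. fold s. nra. }
    apply (sign_const (m - 1) ((-1) ^ S j) (z + - h2) x); auto. lia.
Qed.


Lemma t_sym m : (1 <= m <= n)%nat -> t m = - t (n + 1 - m).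
Proof.
  set (u := fun k => - t (n + 1 - k)).
  assert (Umono : forall a b, (1 <= a)%nat -> (a < b)%nat -> (b <= n)%nat -> u a < u b).
  { intros a b Ha Hab Hb. unfold u. pose proof (t_mono (n + 1 - b) (n + 1 - a) ltac:(lia) ltac:(lia) ltac:(lia)). lra. }
  assert (Umono_le : forall a b, (1 <= a)%nat -> (a <= b)%nat -> (b <= n)%nat -> u a <= u b).
  { intros a b Ha Hab Hb. destruct (Nat.eq_dec a b) as [->|]. lra. left; apply Umono; lia. }
  assert (Uzero : forall k, (1 <= k <= n)%nat -> exists j, (1 <= j <= n)%nat /\ u k = t j).
  { intros k Hk. apply Hz. unfold u. rewrite (proj1 (He_neg n _)).
    replace (He n (t (n + 1 - k))) with 0. ring.
    symmetry. apply Hz. exists (n + 1 - k)%nat. split; [lia|reflexivity]. }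
  assert (Tzero : forall k, (1 <= k <= n)%nat -> exists j, (1 <= j <= n)%nat /\ t k = u j).
  { intros k Hk. destruct (Uzero (n + 1 - k)%nat ltac:(lia)) as [j [Hj E]].
    exists (n + 1 - j)%nat. split; [lia|]. unfold u in *.
    replace (n + 1 - (n + 1 - k))%nat with k in E by lia.
    replace (n + 1 - (n + 1 - j))%nat with j by lia.
    assert (t j = - t k) by lra. lra. }
  induction m as [m IH] using (well_founded_induction lt_wf). intro Hm.
  change (t m = u m).
  destruct (Uzero m Hm) as [j [Hj Ej]].
  destruct (Tzero m Hm) as [j' [Hj' Ej']].
  assert (A1 : u m >= t m).
  { destruct (Nat.lt_ge_cases j m) as [Hjm|Hjm].
    - exfalso. pose proof (IH j Hjm Hj). pose proof (Umono j m ltac:(lia) Hjm ltac:(lia)).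
      change (t j = u j) in H. lra.
    - rewrite Ej. apply Rle_ge, t_mono_le; lia. }
  assert (A2 : t m >= u m).
  { destruct (Nat.lt_ge_cases j' m) as [Hjm|Hjm].
    - exfalso. pose proof (IH j' Hjm Hj'). pose proof (t_mono j' m ltac:(lia) Hjm ltac:(lia)).
      change (t j' = u j') in H. lra.
    - rewrite Ej'. apply Rle_ge, Umono_le; lia. }
  lra.
Qed.

Lemma abs_hf m x : (m <= n)%nat -> In_int m x ->
  Rabs (hermite_fun n x) = (-1) ^ (n - m) * hermite_fun n x.
Proof.
  intros Hm Hx.
  assert (H := sign_all (n - m) ltac:(lia) x). replace (n - (n - m))%nat with m in H by lia.
  specialize (H Hx).
  rewrite hermite_fun_He. rewrite !Rabs_mult.
  rewrite (Rabs_right (hC n)) by (apply Rle_ge, Rlt_le, hC_pos).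
  rewrite (Rabs_right (exp _)) by (apply Rle_ge, Rlt_le, exp_pos).
  replace (Rabs (He n x)) with (Rabs ((-1) ^ (n - m) * He n x)).
  - rewrite Rabs_right by lra. ring.
  - rewrite Rabs_mult, pow_1_abs. ring.
Qed.

End Zeros.


Ltac rring2 := repeat change (plus ?u ?v) with (u + v);
  repeat change (mult ?u ?v) with (u * v);
  match goal with |- ?a = ?b => change (@eq R a b) end.

Lemma pm1_sub a b : (b <= a)%nat -> (-1) ^ (a - b) = (-1) ^ a * (-1) ^ b.
Proof.
  intro H. replace a with ((a - b) + b)%nat at 2 by lia. rewrite pow_add.
  rewrite Rmult_assoc, <- pow_add. replace (b + b)%nat with (2 * b)%nat by lia.
  rewrite pow_1_even. ring.
Qed.

Lemma is_integral_eq F v1 v2 : is_integral_R F v1 -> v1 = v2 -> is_integral_R F v2.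
Proof. intros H E; rewrite <- E; exact H. Qed.

Lemma inner_sum_at0 n i : (1 <= i)%nat ->
  inner_sum n i 0 = INR (fact (n - 1 - i)) / 2 ^ i * hermite_fun (n - 1 - i) 0.
Proof.
  intro Hi. destruct i as [|i]; [lia|]. unfold inner_sum.
  rewrite sum_n_Sm by lia. rring2.
  rewrite (sum_n_m_ext_loc _ (fun _ => zero)).
  - rewrite sum_n_m_const_zero. change (@zero R_AbelianMonoid) with 0.
    replace (S i - S i)%nat with 0%nat by lia. rring2. simpl.
    assert (0 < 2 ^ i) by (apply pow_lt; lra). field. lra.
  - intros k Hk. rewrite pow_i by lia. change (@zero R_AbelianMonoid) with 0. rring2. ring.
Qed.

Lemma shift_last (g : nat -> R) j :
  sum_n_m (fun k => if Compare_dec.lt_dec k j then g (S k) else 0) 0 j = sum_n_m g 1 j.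
Proof.
  destruct j as [|j].
  - rewrite sum_n_n. rewrite sum_n_m_zero by lia. reflexivity.
  - rewrite sum_n_Sm by lia.
    destruct (Compare_dec.lt_dec (S j) (S j)) as [|_]; [lia|].
    rewrite (sum_n_m_ext_loc _ (fun k => g (S k))).
    + rewrite sum_n_m_S. rring2. ring.
    + intros k Hk. destruct (Compare_dec.lt_dec k (S j)); [reflexivity|lia].
Qed.

Lemma abs_pow_odd i x : Nat.Odd i -> x < 0 -> Rabs x ^ i = - x ^ i.
Proof.
  intros [q ->] Hx. rewrite Rabs_left by lra.
  replace (- x) with ((-1) * x) by ring. rewrite Rpow_mult_distr.
  replace (2 * q + 1)%nat with (S (2 * q)) by lia. rewrite pow_1_odd. ring.
Qed.

Lemma abs_pow_pos i x : 0 < x -> Rabs x ^ i = x ^ i.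
Proof. intro Hx. rewrite Rabs_right by lra. reflexivity. Qed.

Section Main.
Variables (n i : nat) (t : nat -> R).
Hypothesis Hn : (1 <= n)%nat.
Hypothesis Hi : (i <= n - 1)%nat.
Hypothesis Hinc : forall m : nat, (1 <= m)%nat -> (m < n)%nat -> t m < t (S m).
Hypothesis Hzeros : forall x : R, hermite n x = 0 <-> exists m : nat, (1 <= m <= n)%nat /\ x = t m.

Lemma Hz : forall x : R, He n x = 0 <-> exists m : nat, (1 <= m <= n)%nat /\ x = t m.
Proof. intro x. rewrite <- hermite_He. apply Hzeros. Qed.

Definition ff (x : R) := x ^ i / INR (fact i) * hermite_fun n x.
Definition AA (x : R) := - inner_sum n i x / (2 * INR (fact n)).

Lemma AA_der x : is_derive AA x (ff x).
Proof.
  apply (is_derive_ext (fun y => (- / (2 * INR (fact n))) * inner_sum n i y)).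
  { intro y. unfold AA. rring2. field. apply Rgt_not_eq. pose proof (fact_pos n). lra. }
  eapply is_derive_eqv. apply is_derive_scal, inner_derive. lia.
  unfold ff. pose proof (fact_pos n). pose proof (fact_pos i). field. lra.
Qed.

Lemma ff_cont x : continuous ff x.
Proof.
  apply (@ex_derive_continuous R_AbsRing R_NormedModule).
  exists (/ INR (fact i) * (INR i * x ^ (i - 1) * hermite_fun n x + x ^ i * (-2 * INR (S n) * hermite_fun (S n) x))).
  apply (is_derive_ext (fun y => / INR (fact i) * (y ^ i * hermite_fun n y))).
  { intro y. unfold ff. unfold Rdiv. rring2. ring. }
  apply is_derive_scal. apply is_derive_mulR. apply is_derive_powx. apply hf_derive.
Qed.

Lemma AA_Bd : Bd AA.
Proof.
  eapply Bd_ext. 2: apply (Bd_lin (- / (2 * INR (fact n))) 0 _ _ (Bd_inner n i) (Bd_inner n i)).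
  intro y. unfold AA. field. apply Rgt_not_eq. pose proof (fact_pos n). lra.
Qed.

Lemma GI_main F K p sg :
  (forall k, (k < K)%nat -> p k < p (S k)) ->
  (forall x, x < p 0%nat -> F x = sg 0%nat * ff x) ->
  (forall k x, (k < K)%nat -> p k < x < p (S k) -> F x = sg (S k) * ff x) ->
  (forall x, p K < x -> F x = sg (S K) * ff x) ->
  is_integral_R F (sum_n_m (fun k => (sg k - sg (S k)) * AA (p k)) 0 K).
Proof.
  apply GI. apply AA_der. apply ff_cont. apply Bd_lim_m, AA_Bd. apply Bd_lim_p, AA_Bd.
Qed.

Lemma absF m x : (m <= n)%nat -> In_int n t m x ->
  x ^ i / INR (fact i) * Rabs (hermite_fun n x) = (-1) ^ (n - m) * ff x.
Proof.
  intros Hm Hx. rewrite (abs_hf n t Hn Hinc Hz m x Hm Hx). unfold ff. ring.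
Qed.

Lemma case_i : Nat.Even i ->
  is_integral_R (fun x => x ^ i / INR (fact i) * Rabs (hermite_fun n x))
    (/ INR (fact n) * sum_n_m (fun m => (-1) ^ (m + n) * inner_sum n i (t m)) 1 n).
Proof.
  intros _.
  eapply is_integral_eq.
  - apply (GI_main _ (n - 1) (fun k => t (S k)) (fun k => (-1) ^ (n - k))).
    + intros k Hk. apply Hinc; lia.
    + intros x Hx. apply absF. lia. unfold In_int. repeat split; intros; try lia; auto.
    + intros k x Hk Hx. apply absF. lia. unfold In_int. repeat split; intros; try lia; try lra.
    + intros x Hx. replace (S (n - 1)) with n in * by lia. apply absF. lia.
      unfold In_int. repeat split; intros; try lia; lra.
  - rewrite <- (sum_n_m_mult_l (K := R_Ring)).
    assert (E : forall G : nat -> R, sum_n_m G 1 n = sum_n_m (fun k => G (S k)) 0 (n - 1)).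
    { intro G. rewrite sum_n_m_S. f_equal. lia. }
    rewrite E.
    apply sum_n_m_ext_loc. intros k Hk. rring2. unfold AA.
    rewrite !pm1_sub by lia. rewrite pow_add. simpl pow.
    pose proof (fact_pos n). field. lra.
Qed.

Lemma absF_neg m x : Nat.Odd i -> (m <= n)%nat -> In_int n t m x -> x < 0 ->
  Rabs x ^ i / INR (fact i) * Rabs (hermite_fun n x) = - (-1) ^ (n - m) * ff x.
Proof.
  intros Ho Hm Hx Hneg. rewrite (abs_hf n t Hn Hinc Hz m x Hm Hx), abs_pow_odd by auto. unfold ff. unfold Rdiv. ring.
Qed.

Lemma absF_pos m x : (m <= n)%nat -> In_int n t m x -> 0 < x ->
  Rabs x ^ i / INR (fact i) * Rabs (hermite_fun n x) = (-1) ^ (n - m) * ff x.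
Proof.
  intros Hm Hx Hpos. rewrite (abs_hf n t Hn Hinc Hz m x Hm Hx), abs_pow_pos by auto. unfold ff. unfold Rdiv. ring.
Qed.

Lemma case_ii : Nat.Odd i -> Nat.Even n ->
  is_integral_R (fun x => Rabs x ^ i / INR (fact i) * Rabs (hermite_fun n x))
       (/ INR (fact n) *
          sum_n_m (fun m => (-1) ^ (m + 1) * inner_sum n i (t m)) 1 (n / 2)
        + (-1) ^ (n / 2) * INR (fact (n - 1 - i)) / (INR (fact n) * 2 ^ i)
          * hermite_fun (n - 1 - i) 0
        + / INR (fact n) *
          sum_n_m (fun m => (-1) ^ m * inner_sum n i (t m)) (n / 2 + 1) n).
Proof.
  intros Ho [h Hh].
  assert (Hh1 : (1 <= h)%nat) by lia.
  assert (Hn2 : (n / 2 = h)%nat) by (rewrite Hh, Nat.mul_comm, Nat.div_mul; lia).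
  rewrite Hn2.
  assert (Hsym := t_sym n t Hn Hinc Hz h ltac:(lia)).
  replace (n + 1 - h)%nat with (S h) in Hsym by lia.
  assert (Hlt := Hinc h Hh1 ltac:(lia)).
  assert (Th : t h < 0) by lra. assert (Th1 : 0 < t (S h)) by lra.
  assert (Hmono := t_mono_le n t Hn Hinc).
  assert (Hpn : (-1) ^ n = 1) by (rewrite Hh; apply pow_1_even).
  eapply is_integral_eq.
  - apply (GI_main _ n (fun k => match Nat.compare k h with Lt => t (S k) | Eq => 0 | Gt => t k end)
                      (fun k => if le_dec k h then - (-1) ^ (n - k) else (-1) ^ (n - (k - 1)))).
    + intros k Hk. cbv beta.
      destruct (Nat.compare_spec k h) as [E|L|G]; destruct (Nat.compare_spec (S k) h) as [E'|L'|G']; try lia.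
      * subst k. lra.
      * rewrite E'. lra.
      * apply Hinc; lia.
      * apply Hinc; lia.
    + intros x Hx. cbv beta in *.
      destruct (Nat.compare_spec 0 h) as [E|L|G]; try lia.
      destruct (le_dec 0 h); [|lia].
      pose proof (Hmono 1%nat h ltac:(lia) ltac:(lia) ltac:(lia)).
      apply absF_neg; [exact Ho|lia| |]. unfold In_int. repeat split; intros; try lia; lra. lra.
    + intros k x Hk Hx. cbv beta in *.
      destruct (Nat.compare_spec k h) as [E|L|G]; destruct (Nat.compare_spec (S k) h) as [E'|L'|G']; try lia.
      * subst k. destruct (le_dec (S h) h); [lia|].
        replace (n - (S h - 1))%nat with (n - h)%nat by lia.
        apply absF_pos; [lia| |lra]. unfold In_int. repeat split; intros; try lia; lra.
      * destruct (le_dec (S k) h); [|lia]. rewrite E'.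
        apply absF_neg; [exact Ho|lia| |]. rewrite E' in Hx. unfold In_int. repeat split; intros; try lia; lra. lra.
      * destruct (le_dec (S k) h); [|lia].
        pose proof (Hmono (S (S k)) h ltac:(lia) ltac:(lia) ltac:(lia)).
        apply absF_neg; [exact Ho|lia| |]. unfold In_int. repeat split; intros; try lia; lra. lra.
      * destruct (le_dec (S k) h); [lia|].
        replace (n - (S k - 1))%nat with (n - k)%nat by lia.
        pose proof (Hmono (S h) k ltac:(lia) ltac:(lia) ltac:(lia)).
        apply absF_pos; [lia| |lra]. unfold In_int. repeat split; intros; try lia; lra.
    + intros x Hx. cbv beta in *.
      destruct (Nat.compare_spec n h) as [E|L|G]; try lia.
      destruct (le_dec (S n) h); [lia|].
      replace (n - (S n - 1))%nat with (n - n)%nat by lia.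
      pose proof (Hmono (S h) n ltac:(lia) ltac:(lia) ltac:(lia)).
      apply absF_pos; [lia| |lra]. unfold In_int. repeat split; intros; try lia; lra.
  - assert (Hf : 0 < INR (fact n)) by apply fact_pos.
    rewrite (sum_n_m_Chasles _ 0 (h - 1) n) by lia.
    replace (S (h - 1)) with h by lia.
    rewrite (sum_Sn_m _ h n) by lia.
    rring2.
    assert (E1 : sum_n_m (fun k => ((if le_dec k h then - (-1) ^ (n - k) else (-1) ^ (n - (k - 1))) -
          (if le_dec (S k) h then - (-1) ^ (n - S k) else (-1) ^ (n - (S k - 1)))) *
          AA (match Nat.compare k h with Lt => t (S k) | Eq => 0 | Gt => t k end)) 0 (h - 1)
        = / INR (fact n) * sum_n_m (fun m => (-1) ^ (m + 1) * inner_sum n i (t m)) 1 h).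
    { rewrite <- (sum_n_m_mult_l (K := R_Ring)).
      assert (E : forall G : nat -> R, sum_n_m G 1 h = sum_n_m (fun k => G (S k)) 0 (h - 1)).
      { intro G. rewrite sum_n_m_S. f_equal. lia. }
      rewrite E. apply sum_n_m_ext_loc. intros k Hk.
      destruct (Nat.compare_spec k h); try lia.
      destruct (le_dec k h); [|lia]. destruct (le_dec (S k) h); [|lia].
      rring2. unfold AA. rewrite !pm1_sub by lia. rewrite pow_add, Hpn. simpl pow.
      field. lra. }
    assert (E2 : ((if le_dec h h then - (-1) ^ (n - h) else (-1) ^ (n - (h - 1))) -
          (if le_dec (S h) h then - (-1) ^ (n - S h) else (-1) ^ (n - (S h - 1)))) *
          AA (match Nat.compare h h with Lt => t (S h) | Eq => 0 | Gt => t h end)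
        = (-1) ^ h * INR (fact (n - 1 - i)) / (INR (fact n) * 2 ^ i) * hermite_fun (n - 1 - i) 0).
    { rewrite Nat.compare_refl. destruct (le_dec h h); [|lia]. destruct (le_dec (S h) h); [lia|].
      replace (n - (S h - 1))%nat with h by lia. replace (n - h)%nat with h by lia.
      unfold AA. rewrite inner_sum_at0 by (destruct Ho; lia).
      assert (0 < 2 ^ i) by (apply pow_lt; lra). field. lra. }
    assert (E3 : sum_n_m (fun k => ((if le_dec k h then - (-1) ^ (n - k) else (-1) ^ (n - (k - 1))) -
          (if le_dec (S k) h then - (-1) ^ (n - S k) else (-1) ^ (n - (S k - 1)))) *
          AA (match Nat.compare k h with Lt => t (S k) | Eq => 0 | Gt => t k end)) (S h) n
        = / INR (fact n) * sum_n_m (fun m => (-1) ^ m * inner_sum n i (t m)) (h + 1) n).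
    { rewrite <- (sum_n_m_mult_l (K := R_Ring)). rewrite Nat.add_1_r.
      apply sum_n_m_ext_loc. intros k Hk.
      destruct (Nat.compare_spec k h); try lia.
      destruct (le_dec k h); [lia|]. destruct (le_dec (S k) h); [lia|].
      destruct k as [|k]; [lia|].
      replace (S k - 1)%nat with k by lia. replace (S (S k) - 1)%nat with (S k) by lia.
      rring2. unfold AA. rewrite !pm1_sub by lia. rewrite Hpn. simpl pow.
      field. lra. }
    rewrite E1, E2, E3. ring.
Qed.

Lemma case_iii : Nat.Odd i -> Nat.Odd n ->
  is_integral_R (fun x => Rabs x ^ i / INR (fact i) * Rabs (hermite_fun n x))
       (/ INR (fact n) *
          sum_n_m (fun m => (-1) ^ m * inner_sum n i (t m)) 1 ((n - 1) / 2)
        + / INR (fact n) *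
          sum_n_m (fun m => (-1) ^ (m + 1) * inner_sum n i (t m)) ((n + 3) / 2) n).
Proof.
  intros Ho [q Hq].
  assert (E1' : ((n - 1) / 2 = q)%nat).
  { replace (n - 1)%nat with (q * 2)%nat by lia. rewrite Nat.div_mul; lia. }
  assert (E3' : ((n + 3) / 2 = S (S q))%nat).
  { replace (n + 3)%nat with (S (S q) * 2)%nat by lia. rewrite Nat.div_mul; lia. }
  rewrite E1', E3'.
  assert (Hsym := t_sym n t Hn Hinc Hz (S q) ltac:(lia)).
  replace (n + 1 - S q)%nat with (S q) in Hsym by lia.
  assert (Tc : t (S q) = 0) by lra.
  assert (Hmono := t_mono_le n t Hn Hinc).
  assert (Hpn : (-1) ^ n = -1) by (rewrite Hq; replace (2 * q + 1)%nat with (S (2 * q)) by lia; apply pow_1_odd).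
  eapply is_integral_eq.
  - apply (GI_main _ (n - 1) (fun k => t (S k))
                      (fun k => if Compare_dec.lt_dec k (S q) then - (-1) ^ (n - k) else (-1) ^ (n - k))).
    + intros k Hk. apply Hinc; lia.
    + intros x Hx. cbv beta in *.
      destruct (Compare_dec.lt_dec 0 (S q)); [|lia].
      pose proof (Hmono 1%nat (S q) ltac:(lia) ltac:(lia) ltac:(lia)).
      apply absF_neg; [exact Ho|lia| |lra]. unfold In_int. repeat split; intros; try lia; lra.
    + intros k x Hk Hx. cbv beta in *.
      destruct (Compare_dec.lt_dec (S k) (S q)).
      * pose proof (Hmono (S (S k)) (S q) ltac:(lia) ltac:(lia) ltac:(lia)).
        apply absF_neg; [exact Ho|lia| |lra]. unfold In_int. repeat split; intros; try lia; lra.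
      * pose proof (Hmono (S q) (S k) ltac:(lia) ltac:(lia) ltac:(lia)).
        apply absF_pos; [lia| |lra]. unfold In_int. repeat split; intros; try lia; lra.
    + intros x Hx. cbv beta in *. replace (S (n - 1)) with n in * by lia.
      destruct (Compare_dec.lt_dec n (S q)); [lia|].
      pose proof (Hmono (S q) n ltac:(lia) ltac:(lia) ltac:(lia)).
      apply absF_pos; [lia| |lra]. unfold In_int. repeat split; intros; try lia; lra.
  - assert (Hf : 0 < INR (fact n)) by apply fact_pos.
    rewrite (sum_n_m_Chasles _ 0 q (n - 1)) by lia.
    rring2.
    assert (E1 : sum_n_m (fun k => ((if Compare_dec.lt_dec k (S q) then - (-1) ^ (n - k) else (-1) ^ (n - k)) -
          (if Compare_dec.lt_dec (S k) (S q) then - (-1) ^ (n - S k) else (-1) ^ (n - S k))) *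
          AA (t (S k))) 0 q
        = / INR (fact n) * sum_n_m (fun m => (-1) ^ m * inner_sum n i (t m)) 1 q).
    { rewrite <- (sum_n_m_mult_l (K := R_Ring)). rewrite <- shift_last.
      apply sum_n_m_ext_loc. intros k Hk.
      destruct (Compare_dec.lt_dec k (S q)); [|lia].
      destruct (Compare_dec.lt_dec k q).
      - destruct (Compare_dec.lt_dec (S k) (S q)); [|lia].
        rring2. unfold AA. rewrite !pm1_sub by lia. rewrite Hpn. simpl pow.
        field. lra.
      - destruct (Compare_dec.lt_dec (S k) (S q)); [lia|].
        rring2. rewrite !pm1_sub by lia. simpl pow. ring. }
    assert (E2 : sum_n_m (fun k => ((if Compare_dec.lt_dec k (S q) then - (-1) ^ (n - k) else (-1) ^ (n - k)) -
          (if Compare_dec.lt_dec (S k) (S q) then - (-1) ^ (n - S k) else (-1) ^ (n - S k))) *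
          AA (t (S k))) (S q) (n - 1)
        = / INR (fact n) * sum_n_m (fun m => (-1) ^ (m + 1) * inner_sum n i (t m)) (S (S q)) n).
    { rewrite <- (sum_n_m_mult_l (K := R_Ring)).
      assert (E : forall G : nat -> R, sum_n_m G (S (S q)) n = sum_n_m (fun k => G (S k)) (S q) (n - 1)).
      { intro G. rewrite sum_n_m_S. f_equal. lia. }
      rewrite E. apply sum_n_m_ext_loc. intros k Hk.
      destruct (Compare_dec.lt_dec k (S q)); [lia|].
      destruct (Compare_dec.lt_dec (S k) (S q)); [lia|].
      rring2. unfold AA. rewrite !pm1_sub by lia. rewrite pow_add, Hpn. simpl pow.
      field. lra. }
    rewrite E1, E2. ring.
Qed.

End Main.


Theorem theorem3p3 (n i : nat) (t : nat -> R)
  (Hn : (1 <= n)%nat) (Hi : (i <= n - 1)%nat)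
  (Hinc : forall m : nat, (1 <= m)%nat -> (m < n)%nat -> t m < t (S m))
  (Hzeros : forall x : R, hermite n x = 0 <->
              exists m : nat, (1 <= m <= n)%nat /\ x = t m) :
  (Nat.Even i ->
     is_integral_R (fun x => x ^ i / INR (fact i) * Rabs (hermite_fun n x))
       (/ INR (fact n) *
        sum_n_m (fun m => (-1) ^ (m + n) * inner_sum n i (t m)) 1 n))
  /\
  (Nat.Odd i -> Nat.Even n ->
     is_integral_R (fun x => Rabs x ^ i / INR (fact i) * Rabs (hermite_fun n x))
       (/ INR (fact n) *
          sum_n_m (fun m => (-1) ^ (m + 1) * inner_sum n i (t m)) 1 (n / 2)
        + (-1) ^ (n / 2) * INR (fact (n - 1 - i)) / (INR (fact n) * 2 ^ i)
          * hermite_fun (n - 1 - i) 0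
        + / INR (fact n) *
          sum_n_m (fun m => (-1) ^ m * inner_sum n i (t m)) (n / 2 + 1) n))
  /\
  (Nat.Odd i -> Nat.Odd n ->
     is_integral_R (fun x => Rabs x ^ i / INR (fact i) * Rabs (hermite_fun n x))
       (/ INR (fact n) *
          sum_n_m (fun m => (-1) ^ m * inner_sum n i (t m)) 1 ((n - 1) / 2)
        + / INR (fact n) *
          sum_n_m (fun m => (-1) ^ (m + 1) * inner_sum n i (t m)) ((n + 3) / 2) n)).
Proof.
  split; [|split].
  - eapply case_i; eauto.
  - eapply case_ii; eauto.
  - eapply case_iii; eauto.
Qed.
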